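(* $\mathsf{DFD}^{\neq\emptyset}$ has the finite model property with respect to its general relational models: for every formula $\varphi\in\mathcal{L}^{\neq\emptyset}$, if $\varphi$ is satisfied at some state of some general relational model of $\mathsf{DFD}^{\neq\emptyset}$, then $\varphi$ is satisfied at some state of a finite general relational model of $\mathsf{DFD}^{\neq\emptyset}$.
   Context: Vocabulary: finite set $V$ of basic variables and predicate symbols with arities. Terms: $v\in V$, and $\bigcirc x$ for a term $x$. Formulas of $\mathcal{L}^{\neq\emptyset}$: $P(x_1,\dots,x_k)$, $\neg\varphi$, $\varphi\wedge\psi$, $\bigcirc\varphi$, $\mathsf{D}_X\varphi$, $D_Xy$ where $X$ ranges over finite non-empty sets of terms. $\bigcirc X=\{\bigcirc x:x\in X\}$. A general relational model of $\mathsf{DFD}^{\neq\emptyset}$ is $(W,g,=_X,\|\cdot\|)_X$: $W$ non-empty; $g:W\to W$; for each finite non-empty set $X$ of terms a binary relation $=_X$ on $W$; $\|\cdot\|$ maps atoms $P(x_1,\dots,x_n)$ and $D_Xy$ ($X$ non-empty) to subsets of $W$ (write $s\vDash\alpha$ for $s\in\|\alpha\|$, and $s\vDash D_XY$ iff $s\vDash D_Xy$ for all $y\in Y$). For all non-empty finite $X,Y,Z$: (C2) $=_X$ is an equivalence relation; (C3) $s\vDash D_Xx$ for $x\in X$; $s\vDash D_XY$ and $s\vDash D_YZ$ imply $s\vDash D_XZ$; $s\vDash D_V\bigcirc x$ for all terms $x$; (C4) $s=_Xw$ and $s\vDash D_XY$ imply $w\vDash D_XY$ and $s=_Yw$; (C5)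 $s=_Xw$, $s\vDash P(x_1,\dots,x_n)$ with $x_i\in X$ imply $w\vDash P(x_1,\dots,x_n)$; (C6) $s\vDash P(\bigcirc x_1,\dots,\bigcirc x_n)$ iff $g(s)\vDash P(x_1,\dots,x_n)$; (C7) $s=_{\bigcirc X}w$ implies $g(s)=_Xg(w)$; (C8) $g(s)\vDash D_XY$ implies $s\vDash D_{\bigcirc X}\bigcirc Y$. Truth: atoms via $\|\cdot\|$; Boolean as usual; $s\vDash\bigcirc\varphi$ iff $g(s)\vDash\varphi$; $s\vDash\mathsf{D}_X\varphi$ iff every $t$ with $s=_Xt$ satisfies $\varphi$. The model is finite if $W$ is finite. *)

(* Defs.v *)
From HB Require Import structures.
From mathcomp Require Import all_boot.
From mathcomp Require Import finmap.
From Stdlib Require List.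
Set Implicit Arguments.
Unset Strict Implicit.
Unset Printing Implicit Defensive.
Local Open Scope fset_scope.

(* A term is  ○^n v  (v a basic variable, n >= 0); it is represented by the
   pair (v, n).  Since terms are generated by  v  and  ○x  only, this is
   exactly the set of terms. *)
Definition term (Var : finType) : Type := (Var * nat)%type.

Definition tvar (Var : finType) (v : Var) : term Var := (v, 0).
Definition tnext (Var : finType) (x : term Var) : term Var := (x.1, x.2.+1).

Definition fnext (Var : finType) (X : {fset term Var}) : {fset term Var} :=
  [fset tnext x | x in X].

Definition Vset (Var : finType) : {fset term Var} :=
  [fset tvar v | v in [seq v | v <- enum Var]].

Inductive form (Var Pred : finType) : Type :=
| FAtom of Pred & seq (term Var)
| FNeg of form Var Pred
| FAnd of form Var Pred & form Var Pred
| FNext of form Var Pred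
| FDBox of {fset term Var} & form Var Pred
| FDep of {fset term Var} & term Var.

Fixpoint wf (Var Pred : finType) (arity : Pred -> nat) (f : form Var Pred) : Prop :=
  match f with
  | FAtom P xs => size xs = arity P
  | FNeg g => wf arity g
  | FAnd g h => wf arity g /\ wf arity h
  | FNext g => wf arity g
  | FDBox X g => X != fset0 /\ wf arity g
  | FDep X _ => X != fset0
  end.

Record structure (Var Pred : finType) : Type := Structure {
  st : Type;
  st_nonempty : inhabited st;
  gmap : st -> st;
  eqX : {fset term Var} -> st -> st -> Prop;
  valP : Pred -> seq (term Var) -> st -> Prop;
  valD : {fset term Var} -> term Var -> st -> Prop
}.

Arguments st {Var Pred}.
Arguments gmap {Var Pred} _ _.
Arguments eqX {Var Pred} _ _ _ _.
Arguments valP {Var Pred} _ _ _ _.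
Arguments valD {Var Pred} _ _ _ _.

Section Model.
Context {Var Pred : finType} (arity : Pred -> nat) (M : structure Var Pred).

Definition valDs (X Y : {fset term Var}) (s : st M) : Prop :=
  forall y, y \in Y -> valD M X y s.

Definition ne (X : {fset term Var}) : Prop := X != fset0.

Definition is_model : Prop :=
  (forall X, ne X ->
     (forall s, eqX M X s s) /\
     (forall s w, eqX M X s w -> eqX M X w s) /\
     (forall s u w, eqX M X s u -> eqX M X u w -> eqX M X s w)) /\
  (forall X s x, ne X -> x \in X -> valD M X x s) /\
  (forall X Y Z s, ne X -> ne Y -> ne Z ->
     valDs X Y s -> valDs Y Z s -> valDs X Z s) /\
  (forall s x, valD M (Vset Var) (tnext x) s) /\
  (forall X Y s w, ne X -> ne Y -> eqX M X s w -> valDs X Y s ->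
     valDs X Y w /\ eqX M Y s w) /\
  (forall X P xs s w, ne X -> size xs = arity P ->
     eqX M X s w -> valP M P xs s -> (forall x, x \in xs -> x \in X) ->
     valP M P xs w) /\
  (forall P xs s, size xs = arity P ->
     (valP M P (map (@tnext Var) xs) s <-> valP M P xs (gmap M s))) /\
  (forall X s w, ne X -> eqX M (fnext X) s w -> eqX M X (gmap M s) (gmap M w)) /\
  (forall X Y s, ne X -> ne Y -> valDs X Y (gmap M s) ->
     valDs (fnext X) (fnext Y) s).

Fixpoint sat (s : st M) (f : form Var Pred) : Prop :=
  match f with
  | FAtom P xs => valP M P xs s
  | FNeg g => ~ sat s g
  | FAnd g h => sat s g /\ sat s h
  | FNext g => sat (gmap M s) g
  | FDBox X g => forall t, eqX M X s t -> sat t g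
  | FDep X y => valD M X y s
  end.

Definition finite_structure : Prop := exists l : list (st M), forall w, List.In w l.
End Model.

(* Main.v *)
Require Import Defs.
From mathcomp Require Import all_boot finmap.
From mathcomp Require Import zify.
From Stdlib Require Import Relations ClassicalEpsilon ProofIrrelevance.
Set Implicit Arguments.
Unset Strict Implicit.
Unset Printing Implicit Defensive.
Local Open Scope fset_scope.

Section Syn.
Variables (Var Pred : finType).
Fixpoint subs (p : form Var Pred) : list (form Var Pred) :=
  p :: match p with
       | FNeg g => subs g
       | FAnd g h => subs g ++ subs h
       | FNext g => subs g
       | FDBox _ g => subs g
       | _ => nil end.
Definition md (xs : seq (term Var)) : nat := foldr (fun x m => maxn x.2 m) 0 xs.
Arguments md : simpl never.
Lemma md_ge xs x : x \in xs -> x.2 <= md xs.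
Proof. rewrite /md; elim: xs => //= a l IH; rewrite inE => /orP [/eqP->|/IH]; lia. Qed.
Fixpoint bnd (p : form Var Pred) : nat :=
  match p with
  | FAtom _ xs => (md xs).+1
  | FNeg g => bnd g
  | FAnd g h => maxn (bnd g) (bnd h)
  | FNext g => (bnd g).+1
  | FDBox X g => maxn (md X).+1 (bnd g)
  | FDep X y => (maxn (md X) y.2).+1
  end.
Lemma bnd_pos p : 0 < bnd p.
Proof. elim: p => //= *; lia. Qed.
End Syn.

Section Quot.
Variables (Var Pred : finType) (arity : Pred -> nat) (M1 : structure Var Pred).
Hypothesis Hm : is_model arity M1.
Variables (T : Type) (f : st M1 -> T) (univ : list T).
Hypothesis Huniv : forall c, List.In (f c) univ.
Hypothesis Hg : forall c d, f c = f d -> f (gmap M1 c) = f (gmap M1 d).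
Hypothesis HP : forall P xs c d, f c = f d -> Defs.valP M1 P xs c -> Defs.valP M1 P xs d.
Hypothesis HD : forall X y c d, f c = f d -> valD M1 X y c -> valD M1 X y d.

Definition rel X (u v : st M1) := f u = f v \/ eqX M1 X u v.
Definition clos X := clos_refl_trans (st M1) (rel X).

Definition QT := {t : T | exists c, f c = t}.
Definition rep (b : QT) : st M1 :=
  proj1_sig (constructive_indefinite_description _ (proj2_sig b)).
Lemma rep_spec b : f (rep b) = proj1_sig b.
Proof. rewrite /rep; by case: constructive_indefinite_description. Qed.
Definition cls (c : st M1) : QT := exist _ (f c) (ex_intro _ c erefl).
Lemma f_rep_cls c : f (rep (cls c)) = f c.
Proof. by rewrite rep_spec. Qed.
Lemma cls_rep b : cls (rep b) = b.
Proof. case: b => t H; apply: subset_eq_compat; by rewrite rep_spec. Qed.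
Lemma cls_eq c d : f c = f d -> cls c = cls d.
Proof. move=> e; exact: subset_eq_compat. Qed.

Definition QM : structure Var Pred :=
  @Structure Var Pred QT
    (match st_nonempty M1 with inhabits c => inhabits (cls c) end)
    (fun b => cls (gmap M1 (rep b)))
    (fun X b1 b2 => clos X (rep b1) (rep b2))
    (fun P xs b => Defs.valP M1 P xs (rep b))
    (fun X y b => valD M1 X y (rep b)).

Lemma clos_inv X (I : st M1 -> Prop) :
  (forall u v, rel X u v -> I u -> I v) -> forall u v, clos X u v -> I u -> I v.
Proof.
move=> H u v; elim.
- exact: H.
- by [].
- by move=> ??? _ h1 _ h2 /h1/h2.
Qed.

Lemma clos_sym X : ne X -> forall u v, clos X u v -> clos X v u.
Proof.
have [C2 _] := Hm.
move=> nX u v; elim.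
- move=> a b [e|e]; apply: rt_step; [by left| right; exact: (proj1 (proj2 (C2 X nX)))].
- move=> a; exact: rt_refl.
- move=> a b c _ h1 _ h2; exact: rt_trans h2 h1.
Qed.

Lemma QM_model : is_model arity QM.
Proof.
have [C2 [C3a [C3b [C3c [C4 [C5 [C6 [C7 C8]]]]]]]] := Hm.
refine (conj _ (conj _ (conj _ (conj _ (conj _ (conj _ (conj _ (conj _ _)))))))) => /=.
- move=> X nX; split; [|split].
  + move=> s; exact: rt_refl.
  + move=> s w; exact: clos_sym.
  + move=> s u w h1 h2; apply: rt_trans h1 _.
    apply: rt_trans h2; exact: rt_refl.
- move=> X s x nX xX; exact: C3a.
- move=> X Y Z s nX nY nZ; exact: C3b.
- move=> s x; exact: C3c.
- move=> X Y s w nX nY h.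
  suff: forall u v, clos X u v -> valDs X Y u -> valDs X Y v /\ clos Y u v by apply.
  move=> u v; elim.
  + move=> a b [e|e] hd.
      split; [move=> y yY; apply: HD e _; exact: hd| apply: rt_step; by left].
    have [h1 h2] := C4 X Y a b nX nY e hd; split => //; apply: rt_step; by right.
  + move=> a hd; split => //; exact: rt_refl.
  + move=> a b c _ h1 _ h2 hd.
    have [hb cab] := h1 hd; have [hc cbc] := h2 hb; split => //; exact: rt_trans cab cbc.
- move=> X P xs s w nX sz h hp hx.
  apply: (clos_inv (I := Defs.valP M1 P xs)) h hp => u v [e|e] hu.
    exact: HP e hu.
  exact: C5 X P xs u v nX sz e hu hx.
- move=> P xs s sz; rewrite C6 //; split; apply: HP.
  + by rewrite f_rep_cls.
  + by rewrite f_rep_cls.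
- move=> X s w nX h.
  have: clos X (gmap M1 (rep s)) (gmap M1 (rep w)).
    elim: h.
    + move=> a b [e|e]; apply: rt_step; [left; exact: Hg| right; exact: C7].
    + move=> a; exact: rt_refl.
    + move=> a b c _ h1 _ h2; exact: rt_trans h1 h2.
  move=> h'.
  apply: rt_trans; first (apply: rt_step; left; exact: f_rep_cls).
  apply: rt_trans h' _; apply: rt_step; left; by rewrite f_rep_cls.
- move=> X Y s nX nY hd; apply: C8 => // y yY.
  apply: (HD (c := rep (cls (gmap M1 (rep s))))); first by rewrite f_rep_cls.
  exact: hd.
Qed.

Lemma QM_finite : finite_structure QM.
Proof.
exists (List.flat_map (fun t => match excluded_middle_informative (exists c, f c = t) with
   | left H => (exist _ t H : QT) :: nil | right _ => nil end) univ).
move=> [t H]; apply/List.in_flat_map; exists t; split.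
  by case: H => c <-.
case: excluded_middle_informative => [H'|//]; left; exact: subset_eq_compat.
Qed.

Variables (lev : st M1 -> nat) (Klim : nat) (phi0 : form Var Pred).
Hypothesis Hlev_f : forall c d, f c = f d -> lev c < Klim -> lev d = lev c.
Hypothesis Hlev_eq : forall X c d, eqX M1 X c d -> lev d = lev c.
Hypothesis Hlev_g : forall c, lev c < Klim -> lev (gmap M1 c) = (lev c).+1.
Hypothesis HS : forall p, List.In p (subs phi0) -> forall c d, f c = f d ->
  lev c < Klim -> sat c p -> sat d p.

Lemma truthQ : forall p, (forall q, List.In q (subs p) -> List.In q (subs phi0)) ->
  wf arity p -> forall c, lev c + bnd p <= Klim -> (@sat _ _ QM (cls c) p <-> sat c p).
Proof.
have [C2 _] := Hm.
elim=> /=.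
- move=> P xs _ _ c _; split; apply: HP; by rewrite f_rep_cls.
- move=> g IH hs w c hl; rewrite IH //; move=> q hq; apply: hs; by right.
- move=> g IHg h IHh hs [wg wh] c hl; rewrite IHg ?IHh //; try lia;
   move=> q hq; apply: hs; right; apply/List.in_or_app; tauto.
- move=> g IH hs w c hl.
  have lc : lev c < Klim by have := bnd_pos g; lia.
  have e : cls (gmap M1 (rep (cls c))) = cls (gmap M1 c) by apply: cls_eq; apply: Hg; rewrite f_rep_cls.
  rewrite e IH //; [move=> q hq; apply: hs; by right| rewrite Hlev_g //; lia].
- move=> X g IH hs [nX w] c hl.
  have lc : lev c < Klim by have := bnd_pos g; lia.
  have hs' : forall q, List.In q (subs g) -> List.In q (subs phi0) by move=> q hq; apply: hs; right.
  split.
  + move=> h t ct; rewrite -IH //; last by rewrite (Hlev_eq ct); lia.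
    apply: h; apply: rt_trans; first (apply: rt_step; left; exact: f_rep_cls).
    apply: rt_trans; first (apply: rt_step; right; exact: ct).
    apply: rt_step; left; by rewrite f_rep_cls.
  + move=> h b' cb.
    rewrite -(cls_rep b').
    have hc0 : clos X c (rep b') by apply: rt_trans cb; apply: rt_step; left; by rewrite f_rep_cls.
    have := clos_inv (I := fun u => lev u = lev c /\ sat u (FDBox X g)) _ hc0.
    case.
    * move=> u v [e|e] [lu su].
        have lv := Hlev_f e (eq_ind_r (fun x => x < Klim) lc lu).
        split; first by rewrite lv.
        apply: HS e _ su; [apply: hs; by left| by rewrite lu].
      split; first by rewrite (Hlev_eq e).
      move=> t vt; apply: su; have [_ [_ tr]] := C2 X nX; exact: tr e vt.
    * by split.
    * move=> l1 s1; rewrite IH //; last by rewrite l1; lia.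
      apply: s1; have [rf _] := C2 X nX; exact: rf.
- move=> X y _ _ c _; split; apply: HD; by rewrite f_rep_cls.
Qed.
End Quot.

Lemma memIn (A : eqType) (x : A) s : x \in s -> List.In x s.
Proof. elim: s => //= a l IH; rewrite inE => /orP [/eqP->|/IH]; tauto. Qed.
Lemma Inmem (A : eqType) (x : A) s : List.In x s -> x \in s.
Proof. elim: s => //= a l IH [->|/IH h]; rewrite inE ?eqxx //; by rewrite h orbT. Qed.
Lemma size_length (A : Type) (s : seq A) : size s = List.length s.
Proof. by elim: s => //= a l ->. Qed.

Fixpoint lists (A : Type) (n : nat) (L : list A) : list (list A) :=
  match n with
  | 0 => nil :: nil
  | n'.+1 => List.flat_map (fun x => List.map (cons x) (lists n' L)) L
  end.
Lemma in_lists (A : Type) (L : list A) s :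
  (forall x, List.In x s -> List.In x L) -> List.In s (lists (List.length s) L).
Proof.
elim: s => /= [|a l IH] H; first by left.
apply/List.in_flat_map; exists a; split; first by apply: H; left.
apply: List.in_map; apply: IH => x hx; apply: H; by right.
Qed.
Fixpoint subsq (A : Type) (l : list A) : list (list A) :=
  match l with
  | nil => nil :: nil
  | x :: l' => List.map (cons x) (subsq l') ++ subsq l'
  end.
Lemma in_subsq (A : Type) (p : pred A) l : List.In (filter p l) (subsq l).
Proof.
elim: l => /= [|a l IH]; first by left.
apply/List.in_or_app; case: (p a); [left; exact: List.in_map| by right].
Qed.

Definition pb (P : Prop) : bool := if excluded_middle_informative P then true else false.
Lemma pb_eq P Q : pb P = pb Q -> (P <-> Q).
Proof.
rewrite /pb; case: excluded_middle_informative => hp; case: excluded_middle_informative => hq /= e;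
 try discriminate; tauto.
Qed.
Lemma pb_iff P Q : (P <-> Q) -> pb P = pb Q.
Proof.
rewrite /pb; case: excluded_middle_informative => hp; case: excluded_middle_informative => hq e //=;
 exfalso; tauto.
Qed.

Section Trunc.
Variables (Var Pred : finType) (arity : Pred -> nat) (M : structure Var Pred).
Hypothesis HM : is_model arity M.
Variable K : nat.

Definition real (k : nat) (x : term Var) : bool := k + x.2 < K.
Definition rp k (X : {fset term Var}) : {fset term Var} := [fset x in X | real k x].
Definition Rn (s t : st M) := forall P, arity P = 0 ->
  (Defs.valP M P [::] s <-> Defs.valP M P [::] t).
Definition SS := (nat * st M)%type.
Definition eqS X (c d : SS) := c.1 = d.1 /\
  (if rp c.1 X == fset0 then Rn c.2 d.2 else eqX M (rp c.1 X) c.2 d.2).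
Definition gS (c : SS) : SS := (minn c.1.+1 K, gmap M c.2).
Definition valPS P xs (c : SS) :=
  size xs = arity P /\ all (real c.1) xs /\ Defs.valP M P xs c.2.
Definition valDS X y (c : SS) :=
  real c.1 y -> rp c.1 X != fset0 /\ valD M (rp c.1 X) y c.2.
Definition MS : structure Var Pred :=
  @Structure Var Pred SS (match st_nonempty M with inhabits s => inhabits (0, s) end)
    gS eqS valPS valDS.

Lemma in_rp k X x : (x \in rp k X) = (x \in X) && real k x.
Proof. by rewrite !inE. Qed.
Lemma real_next k x : real k (tnext x) = real (minn k.+1 K) x.
Proof. rewrite /real /tnext /=; apply/idP/idP; lia. Qed.
Lemma rp_fnext k X : rp k (fnext X) = fnext (rp (minn k.+1 K) X).
Proof.
apply/fsetP => x; rewrite in_rp; apply/andP/imfsetP.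
- case=> /imfsetP [y yX ->] r; exists y => //; by rewrite in_rp yX -real_next.
- case=> y; rewrite /= in_rp => /andP [yX ry] ->; split; last by rewrite real_next.
  apply/imfsetP; by exists y.
Qed.
Lemma fnext0 (X : {fset term Var}) : (fnext X == fset0) = (X == fset0).
Proof.
apply/idP/idP.
- apply: contraLR => /fset0Pn [x xX]; apply/fset0Pn; exists (tnext x); apply/imfsetP; by exists x.
- apply: contraLR => /fset0Pn [x /imfsetP [y yX _]]; apply/fset0Pn; by exists y.
Qed.

Lemma Rn_refl s : Rn s s. Proof. by move=> P _. Qed.
Lemma Rn_eq X s t : ne X -> eqX M X s t -> Rn s t.
Proof.
have [C2 [_ [_ [_ [_ [C5 _]]]]]] := HM.
move=> nX e P ar; split => h.
- refine (C5 X P [::] s t nX _ e h _) => //; by rewrite ar.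
- have st : eqX M X t s by exact: (proj1 (proj2 (C2 X nX))).
  refine (C5 X P [::] t s nX _ st h _) => //; by rewrite ar.
Qed.

Lemma MS_model : is_model arity MS.
Proof.
have [C2 [C3a [C3b [C3c [C4 [C5 [C6 [C7 C8]]]]]]]] := HM.
refine (conj _ (conj _ (conj _ (conj _ (conj _ (conj _ (conj _ (conj _ _)))))))) => /=.
- move=> X nX; split; [|split].
  + case=> k s; split => //=; case: ifP => h; first exact: Rn_refl.
    exact: (proj1 (C2 _ (negbT h))).
  + case=> k s [k' t] [/= e h]; subst k'; split => //=; move: h; case: ifP => h.
      by move=> h1 P ar; rewrite h1.
    exact: (proj1 (proj2 (C2 _ (negbT h)))).
  + case=> k s [k' u] [k'' w] [/= e1 h1] [/= e2 h2]; subst k' k''.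
    split => //=; move: h1 h2; case: ifP => h h1 h2.
      by move=> P ar; rewrite h1 // h2.
    exact: (proj2 (proj2 (C2 _ (negbT h)))) h1 h2.
- move=> X [k s] x nX xX /= r; split.
    apply/fset0Pn; exists x; by rewrite in_rp xX r.
  apply: C3a; last by rewrite in_rp xX r.
  apply/fset0Pn; exists x; by rewrite in_rp xX r.
- move=> X Y Z [k s] nX nY nZ hXY hYZ z zZ r.
  have [nYr dY] := hYZ z zZ r.
  have [y0 y0Y] := fset0Pn _ nYr; move: (y0Y); rewrite in_rp => /andP [y0Y' r0].
  have [nXr _] := hXY y0 y0Y' r0.
  split => //; apply: (C3b _ (rp k Y) [fset z]) => //.
  + apply/fset0Pn; exists z; by rewrite inE.
  + move=> y; rewrite in_rp => /andP [yY ry]; exact: (hXY y yY ry).2.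
  + move=> z'; rewrite inE => /eqP ->; exact: dY.
  + by rewrite inE.
- move=> [k s] x /= r.
  have hV : rp k (Vset Var) = Vset Var.
    apply/fsetP => y; rewrite in_rp; case yV: (y \in Vset Var) => //=.
    move/imfsetP: yV => [v _ ->]; move: r; rewrite /real /=; lia.
  rewrite hV; split; last exact: C3c.
  apply/fset0Pn; exists (tvar x.1); apply/imfsetP; exists x.1 => //=.
  apply/mapP; exists x.1 => //; by rewrite mem_enum.
- move=> X Y [k s] [k' t] nX nY [/= e h] hd; subst k'.
  have HXr : rp k Y != fset0 -> rp k X != fset0 /\ valDs (rp k X) (rp k Y) s.
    move=> /fset0Pn [y0]; rewrite in_rp => /andP [y0Y r0].
    split; first exact: (hd y0 y0Y r0).1.
    move=> y; rewrite in_rp => /andP [yY ry]; exact: (hd y yY ry).2.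
  split.
  + move=> y yY /= r.
    have yr : y \in rp k Y by rewrite in_rp yY r.
    have nYr : rp k Y != fset0 by apply/fset0Pn; exists y.
    have [nXr hds] := HXr nYr; move: h; rewrite (negbTE nXr) => h.
    split => //; have [h1 _] := C4 _ _ _ _ nXr nYr h hds; exact: h1 y yr.
  + split => //=; case: ifP => hY.
      move: h; case: ifP => hX h; [exact: h| exact: Rn_eq (negbT hX) h].
    have [nXr hds] := HXr (negbT hY); move: h; rewrite (negbTE nXr) => h.
    exact: (C4 _ _ _ _ nXr (negbT hY) h hds).2.
- move=> X P xs [k s] [k' t] nX sz [/= e h] [_ [ra hp]] hx; subst k'.
  split => //; split => //=; move: h; case: ifP => hX h.
  + case: xs sz ra hp hx => [|x xs'] sz ra hp hx.
      apply/(h P) => //; by rewrite -sz.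
    have : x \in rp k X by rewrite in_rp hx ?inE ?eqxx //; case/andP: ra.
    by rewrite (eqP hX) inE.
  + apply: C5 (negbT hX) sz h hp _ => x xx; rewrite in_rp hx //; exact: (allP ra).
- move=> P xs [k s] sz /=; rewrite /valPS /= size_map.
  have -> : all (real k) (map (@tnext Var) xs) = all (real (minn k.+1 K)) xs.
    rewrite all_map; apply: eq_all => x; exact: real_next.
  by rewrite (C6 P xs s sz).
- move=> X [k s] [k' t] nX [/= e h]; subst k'; split => //=.
  move: h; rewrite rp_fnext fnext0; case: ifP => hX h.
  + move=> P ar; have sz : size (@nil (term Var)) = arity P by rewrite ar.
    rewrite -!(C6 P [::] _ sz) /=; exact: h.
  + apply: C7 => //; exact: negbT.
- move=> X Y [k s] nX nY hd z /imfsetP [y yY ->] /= r.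
  rewrite real_next in r; have [nA dA] := hd y yY r.
  rewrite rp_fnext fnext0; split => //.
  have := C8 (rp (minn k.+1 K) X) [fset y] s nA _ _ (tnext y).
  apply.
  + apply/fset0Pn; exists y; by rewrite inE.
  + by move=> y'; rewrite inE => /eqP ->.
  + apply/imfsetP; exists y => //; by rewrite inE.
Qed.

Lemma trunc p : wf arity p -> forall k s, k + bnd p <= K ->
  (@sat _ _ MS (k, s) p <-> sat s p).
Proof.
elim: p => /=.
- move=> P xs sz k s hk; split; first by case=> _ [].
  move=> h; split => //; split => //; apply/allP => x xx; rewrite /real /=.
  have := md_ge xx; case: x xx => v n /= _; lia.
- move=> g IH w k s hk; by rewrite IH.
- move=> g IHg h IHh [wg wh] k s hk; rewrite IHg ?IHh //; lia.
- move=> g IH w k s hk.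
  have := bnd_pos g => bp.
  rewrite /gS /= (_ : minn k.+1 K = k.+1); last lia.
  apply: IH => //; lia.
- move=> X g IH [nX w] k s hk.
  have hrp : rp k X = X.
    apply/fsetP => x; rewrite in_rp; case xX: (x \in X) => //=.
    rewrite /real; have := md_ge xX; case: x xX => v n /= _; lia.
  split.
  + move=> h t e; rewrite -(IH w k t); last lia.
    apply: h; rewrite /eqS /= hrp (negbTE nX); by split.
  + move=> h [k' t] [/= e]; rewrite hrp (negbTE nX) => e2; subst k'.
    rewrite IH //; last lia; exact: h.
- move=> X y nX k s hk.
  have hrp : rp k X = X.
    apply/fsetP => x; rewrite in_rp; case xX: (x \in X) => //=.
    rewrite /real; have := md_ge xX; case: x xX => v n /= _; lia.
  have ry : real k y by rewrite /real; case: y hk => v n /=; lia.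
  rewrite /valDS hrp; split; [by move=> h; case: (h ry)| by move=> h _].
Qed.

Variable phi : form Var Pred.

Definition L : list (term Var) :=
  List.flat_map (fun v => List.map (fun n => (v, n)) (List.seq 0 K)) (enum Var).
Lemma inL (x : term Var) : x.2 < K -> List.In x L.
Proof.
case: x => v n /= h; apply/List.in_flat_map; exists v; split.
  apply: memIn; by rewrite mem_enum.
apply/List.in_map_iff; exists n; split => //; apply/List.in_seq; lia.
Qed.

Definition BQ : list (SS -> Prop) :=
  List.map (fun j => fun e : SS => e.1 = j) (List.seq 0 K)
  ++ List.flat_map (fun P => List.map (valPS P) (lists (arity P) L)) (enum Pred)
  ++ List.flat_map (fun s => List.map (fun y => fun e : SS =>
          real e.1 y /\ valD M [fset x in s] y e.2) L) (subsq L)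
  ++ List.map (fun p => fun e : SS => e.1 < K /\ @sat _ _ MS e p) (subs phi).

Definition fS (c : SS) : list (list bool) :=
  List.map (fun j => List.map (fun Q => pb (Q (iter j gS c))) BQ) (List.seq 0 K.+1).

Lemma fS_eq c d : fS c = fS d -> forall j, j <= K -> forall Q, List.In Q BQ ->
  (Q (iter j gS c) <-> Q (iter j gS d)).
Proof.
move/List.map_ext_in_iff => h j hj Q hQ.
have hj' : List.In j (List.seq 0 K.+1) by apply/List.in_seq; lia.
move: (h j hj') => /List.map_ext_in_iff h2.
exact: pb_eq (h2 Q hQ).
Qed.

Lemma fS_of c d : (forall j, j <= K -> forall Q, List.In Q BQ ->
  (Q (iter j gS c) <-> Q (iter j gS d))) -> fS c = fS d.
Proof.
move=> H; apply: List.map_ext_in => j /List.in_seq hj.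
apply: List.map_ext_in => Q hQ; apply: pb_iff; apply: H => //; lia.
Qed.

Lemma stab (e : SS) : K <= e.1 -> forall Q, List.In Q BQ -> (Q (gS e) <-> Q e).
Proof.
have [_ [_ [_ [_ [_ [_ [C6 _]]]]]]] := HM.
case: e => k s /= hk Q; rewrite !List.in_app_iff; case; [|case; [|case]].
- case/List.in_map_iff => j [<- /List.in_seq hj] /=; split => ?; lia.
- case/List.in_flat_map => P [_ /List.in_map_iff [xs [<- _]]].
  rewrite /valPS /=; case: xs => [|x xs].
  + split; case=> sz [_ h]; split => //; split => //.
    * exact: (C6 P [::] s sz).2 h.
    * exact: (C6 P [::] s sz).1 h.
  + split; case=> _ [/andP [r _]]; move: r; rewrite /real; case: x => v n /=; lia.
- case/List.in_flat_map => sq [_ /List.in_map_iff [y [<- _]]] /=.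
  split; case=> r; move: r; rewrite /real; case: y => v n /=; lia.
- case/List.in_map_iff => p [<- _] /=; split; case=> r; lia.
Qed.

Lemma iter_lev j c : minn j K <= (iter j gS c).1.
Proof. elim: j => [|j IH] /=; lia. Qed.

Lemma Hg_S c d : fS c = fS d -> fS (gS c) = fS (gS d).
Proof.
move=> h; apply: fS_of => j hj Q hQ; rewrite -!iterSr.
case: (ltnP j K) => hjK.
  exact: fS_eq h j.+1 hjK Q hQ.
have -> : j = K by lia.
rewrite !iterS !stab //; try (have := iter_lev K c; have := iter_lev K d; lia).
exact: fS_eq h K (leqnn K) Q hQ.
Qed.

Lemma lev_f c d : fS c = fS d -> c.1 < K -> d.1 = c.1.
Proof.
move=> h lc.
have hQ : List.In (fun e : SS => e.1 = c.1) BQ.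
  apply/List.in_or_app; left; apply/List.in_map_iff; exists c.1; split => //.
  apply/List.in_seq; lia.
exact: (fS_eq h (leq0n K) hQ).1 erefl.
Qed.

Lemma HP_S P xs c d : fS c = fS d -> valPS P xs c -> valPS P xs d.
Proof.
move=> h hc; have hQ : List.In (valPS P xs) BQ.
  apply/List.in_or_app; right; apply/List.in_or_app; left.
  apply/List.in_flat_map; exists P; split; first by apply: memIn; rewrite mem_enum.
  apply: List.in_map; case: hc => sz [ra _]; rewrite -sz size_length.
  apply: in_lists => x /Inmem hx; apply: inL; move: (allP ra x hx).
  rewrite /real; case: x {hx} => v n /=; lia.
exact: (fS_eq h (leq0n K) hQ).1 hc.
Qed.

Lemma HD_S X y c d : fS c = fS d -> valDS X y c -> valDS X y d.
Proof.
move=> h hc r.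
have ld : d.1 < K by move: r; rewrite /real; case: y {hc} => v n /=; lia.
have e : c.1 = d.1 := lev_f (esym h) ld.
have rc : real c.1 y by rewrite e.
have [nA dA] := hc rc; rewrite -e; split => //.
pose sq := [seq x <- L | x \in rp c.1 X].
have hs : [fset x in sq] = rp c.1 X.
  apply/fsetP => x; rewrite inE mem_filter; apply/andP/idP; first by case.
  move=> hx; split => //; apply: Inmem; apply: inL; move: hx.
  rewrite in_rp /real => /andP [_]; case: x => v n /=; lia.
have hQ : List.In (fun e : SS => real e.1 y /\ valD M [fset x in sq] y e.2) BQ.
  apply/List.in_or_app; right; apply/List.in_or_app; right; apply/List.in_or_app; left.
  apply/List.in_flat_map; exists sq; split; first exact: in_subsq.
  apply: List.in_map; apply: inL; move: r; rewrite /real; case: y {hc rc dA hs} => v n /=; lia.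
have := (fS_eq h (leq0n K) hQ).1; rewrite /= hs; case => //; by rewrite e.
Qed.

Lemma HS_S p : List.In p (subs phi) -> forall c d, fS c = fS d -> c.1 < K ->
  @sat _ _ MS c p -> @sat _ _ MS d p.
Proof.
move=> hp c d h lc hc.
have hQ : List.In (fun e : SS => e.1 < K /\ @sat _ _ MS e p) BQ.
  do 3 (apply/List.in_or_app; right); exact: List.in_map.
by case: ((fS_eq h (leq0n K) hQ).1 (conj lc hc)).
Qed.

Definition univS := lists K.+1 (lists (size BQ) [:: true; false]).
Lemma Huniv_S c : List.In (fS c) univS.
Proof.
rewrite /univS; have -> : K.+1 = List.length (fS c) by rewrite /fS List.length_map List.length_seq.
apply: in_lists => x /List.in_map_iff [j [<- _]].
rewrite size_length -(List.length_map (fun Q => pb (Q (iter j gS c)))).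
apply: in_lists => b _; case: b => /=; tauto.
Qed.
End Trunc.

Unset Implicit Arguments.

Theorem theorem4p3 (Var Pred : finType) (arity : Pred -> nat)
  (phi : form Var Pred) :
  wf arity phi ->
  (exists (M : structure Var Pred) (s : st M), is_model arity M /\ sat s phi) ->
  exists (M' : structure Var Pred) (s' : st M'),
    is_model arity M' /\ finite_structure M' /\ sat s' phi.
Proof.
move=> w [M [s [HM hs]]].
pose K := bnd phi.
have MSm := MS_model HM K.
pose f : st (MS arity M K) -> seq (seq bool) := @fS _ _ arity M K phi.
have Hg : forall c d : st (MS arity M K), f c = f d ->
    f (gmap (MS arity M K) c) = f (gmap (MS arity M K) d).
  move=> c d h; exact: (@Hg_S _ _ arity M HM K phi c d h).
have HP : forall P xs (c d : st (MS arity M K)), f c = f d ->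
    Defs.valP (MS arity M K) P xs c -> Defs.valP (MS arity M K) P xs d.
  move=> P xs c d h; exact: (@HP_S _ _ arity M K phi P xs c d h).
have HD : forall X y (c d : st (MS arity M K)), f c = f d ->
    valD (MS arity M K) X y c -> valD (MS arity M K) X y d.
  move=> X y c d h; exact: (@HD_S _ _ arity M K phi X y c d h).
exists (QM f), (cls f (0, s)).
split; first exact: (@QM_model _ _ arity (MS arity M K) MSm _ f Hg HP HD).
split; first exact: (@QM_finite _ _ (MS arity M K) _ f _ (Huniv_S arity K phi)).
rewrite (@truthQ _ _ arity (MS arity M K) MSm _ f Hg HP HD (fun c => c.1) K phi) //.
- by rewrite trunc.
- move=> c d h lc; exact: lev_f h lc.
- by move=> X c d [].
- move=> [k t] /= lk; lia.
- move=> p hp c d h lc; exact: (@HS_S _ _ arity M K phi p hp c d h lc).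
Qed.
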